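(* Let $\mathcal{D}$ be an abstract system of proof notations, $s\in\mathbb{N}$, and let $d\in\mathcal{D}$ be $s$-bounded in $\mathcal{D}$. Then $\mathsf Ed$ is $o(d)\cdot(s+2)$-bounded in $\mathbb{E}(\mathcal{D})$, and $\mathsf E\mathsf Ed$ is $2^{o(d)}\cdot o(d)\cdot(s+4)$-bounded in $\mathbb{E}(\mathcal{D})$.
   Context: An abstract system of proof notations is a set $\mathcal{D}$ with functions $|\cdot|,o(\cdot)\colon\mathcal{D}\to\mathbb{N}\setminus\{0\}$ (size and height) and a relation $\to\subseteq\mathcal{D}\times\mathcal{D}$ such that $d\to d'$ implies $o(d')<o(d)$. The cut-elimination closure $\mathbb{E}(\mathcal{D})$ is the abstract system of formal terms inductively generated by: every $d\in\mathcal{D}$ is in $\mathbb{E}(\mathcal{D})$ (with size and height inherited); if $d,e\in\mathbb{E}(\mathcal{D})$ then $\mathsf{I}d,\ \mathsf{R}de,\ \mathsf{E}d\in\mathbb{E}(\mathcal{D})$ ($\mathsf I,\mathsf R,\mathsf E$ new symbols), with $|\mathsf Id|=|d|+1$, $|\mathsf Rde|=|d|+|e|+1$, $|\mathsf Ed|=|d|+1$, $o(\mathsf Id)=o(d)$, $o(\mathsf Rde)=o(d)+o(e)$, $o(\mathsf Ed)=2^{o(d)}-1$. The relation $\to$ on $\mathbb{E}(\mathcal{D})$ is inductively generated by: $d\to d'$ in $\mathcal{D}$ implies $d\to d'$; $d\to d'$ implies $\mathsf Id\to\mathsf Id'$; $e\to e'$ implies $\mathsf Rde\to\mathsf Rde'$;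 $d\to d'$ implies $\mathsf Ed\to\mathsf Ed'$; $\mathsf Rde\to\mathsf Id$ always; and $d\to d'$ together with $d\to d''$ implies $\mathsf Ed\to\mathsf R(\mathsf Ed')(\mathsf Ed'')$. For an abstract system $\mathcal{X}$ (here $\mathcal{D}$ or $\mathbb{E}(\mathcal{D})$) and $x\in\mathcal{X}$, $x$ is called $t$-bounded in $\mathcal{X}$ if every $x'\in\mathcal{X}$ with $x\to^\ast x'$ (reflexive transitive closure of the relation $\to$ of $\mathcal{X}$) satisfies $|x'|\le t$. *)

(* Defs.v *)
From Stdlib Require Import Arith Relations.

Set Implicit Arguments.

(** An abstract system of proof notations: a set D with size |.| and height o(.)
    valued in N \ {0}, and a relation -> such that d -> d' implies o(d') < o(d). *)
Record APN := {
  carrier :> Type;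
  size : carrier -> nat;
  height : carrier -> nat;
  step : carrier -> carrier -> Prop;
  size_pos : forall d, 0 < size d;
  height_pos : forall d, 0 < height d;
  step_height : forall d d', step d d' -> height d' < height d
}.

Inductive ETerm (D : APN) : Type :=
| Base : carrier D -> ETerm D
| I : ETerm D -> ETerm D
| R : ETerm D -> ETerm D -> ETerm D
| E : ETerm D -> ETerm D.

Arguments Base {D} _.
Arguments I {D} _.
Arguments R {D} _ _.
Arguments E {D} _.

Fixpoint Esize (D : APN) (x : ETerm D) : nat :=
  match x with
  | Base d => size D d
  | I d => Esize d + 1
  | R d e => Esize d + Esize e + 1
  | E d => Esize d + 1
  end.

Fixpoint Eheight (D : APN) (x : ETerm D) : nat :=
  match x with
  | Base d => height D d
  | I d => Eheight d
  | R d e => Eheight d + Eheight e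
  | E d => 2 ^ Eheight d - 1
  end.

Inductive Estep (D : APN) : ETerm D -> ETerm D -> Prop :=
| Estep_base : forall d d', step D d d' -> Estep (Base d) (Base d')
| Estep_I : forall d d', Estep d d' -> Estep (I d) (I d')
| Estep_R : forall d e e', Estep e e' -> Estep (R d e) (R d e')
| Estep_E : forall d d', Estep d d' -> Estep (E d) (E d')
| Estep_RI : forall d e, Estep (R d e) (I d)
| Estep_ER : forall d d' d'', Estep d d' -> Estep d d'' ->
    Estep (E d) (R (E d') (E d'')).

Definition bounded (D : APN) (t : nat) (d : carrier D) : Prop :=
  forall d', clos_refl_trans (carrier D) (step D) d d' -> size D d' <= t.

Definition Ebounded (D : APN) (t : nat) (x : ETerm D) : Prop :=
  forall x', clos_refl_trans (ETerm D) (@Estep D) x x' -> Esize x' <= t.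

(* Main.v *)
Require Import Defs.
From Stdlib Require Import Arith Relations Lia.
Set Implicit Arguments.

Lemma pow2_pos n : 1 <= 2 ^ n.
Proof. induction n; simpl; lia. Qed.

Lemma Eheight_pos (D : APN) (x : ETerm D) : 0 < Eheight x.
Proof.
  induction x; simpl; try lia.
  - apply height_pos.
  - destruct (Eheight x) as [|k]; [lia|]. rewrite Nat.pow_succ_r'.
    pose proof (pow2_pos k). lia.
Qed.

Lemma pow_mono a b : a <= b -> 2 ^ a <= 2 ^ b.
Proof. intros; apply Nat.pow_le_mono_r; lia. Qed.

Lemma Estep_height (D : APN) (x y : ETerm D) : Estep x y -> Eheight y < Eheight x.
Proof.
  induction 1; simpl.
  - apply step_height; assumption.
  - assumption.
  - lia.
  - pose proof (pow2_pos (Eheight d')).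
    assert (2 ^ Eheight d' < 2 ^ Eheight d) by (apply Nat.pow_lt_mono_r; lia). lia.
  - pose proof (Eheight_pos e). lia.
  - destruct (Eheight d) as [|k] eqn:Hd; [lia|].
    rewrite Nat.pow_succ_r'.
    pose proof (pow_mono (a:=Eheight d') (b:=k) ltac:(lia)).
    pose proof (pow_mono (a:=Eheight d'') (b:=k) ltac:(lia)).
    pose proof (pow2_pos (Eheight d')). pose proof (pow2_pos (Eheight d'')). lia.
Qed.

Lemma Ebounded_step (D : APN) s (y y' : ETerm D) : Ebounded s y -> Estep y y' -> Ebounded s y'.
Proof.
  intros H Hs z Hz. apply H. eapply rt_trans; [apply rt_step; exact Hs| exact Hz].
Qed.

Inductive Q (D : APN) (s : nat) : nat -> ETerm D -> Prop :=
| QE : forall h y, Ebounded s y -> Eheight y <= h -> Q s h (E y)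
| QR : forall k y z, Ebounded s y -> Eheight y <= k -> Q s k z -> Q s (S k) (R (E y) z)
| QI : forall k z, Q s k z -> Q s (S k) (I z).

Lemma Q_step (D : APN) s h (x : ETerm D) : Q s h x -> forall x', Estep x x' -> Q s h x'.
Proof.
  induction 1; intros x' Hst.
  - inversion Hst; subst.
    + match goal with Hab : Estep y ?a |- _ =>
        pose proof (Estep_height Hab); apply QE; [eapply Ebounded_step; eauto | lia] end.
    + match goal with Hab : Estep y ?a, Hac : Estep y ?b |- Q _ _ (R (E ?a) (E ?b)) =>
      pose proof (Estep_height Hab); pose proof (Estep_height Hac);
      destruct h as [|k]; [ pose proof (Eheight_pos a); lia |];
      apply QR; [eapply Ebounded_step; eauto | lia |
        apply QE; [eapply Ebounded_step; eauto | lia]] end.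
  - inversion Hst; subst.
    + apply QR; auto.
    + apply QI. apply QE; auto.
  - inversion Hst; subst. apply QI; auto.
Qed.

Lemma Q_size (D : APN) s h (x : ETerm D) : Q s h x -> Esize x + 1 <= h * (s + 2).
Proof.
  induction 1; simpl.
  - pose proof (H y (rt_refl _ _ _)). pose proof (Eheight_pos y).
    destruct h as [|h]; [lia|]. simpl. lia.
  - pose proof (H y (rt_refl _ _ _)). lia.
  - lia.
Qed.

Lemma lemmaA (D : APN) s (y : ETerm D) :
  Ebounded s y -> Ebounded (Eheight y * (s + 2) - 1) (E y).
Proof.
  intros Hb x' Hx.
  assert (Hq : Q s (Eheight y) x').
  { assert (H0 : Q s (Eheight y) (E y)) by (apply QE; auto).
    revert H0. induction Hx; intros H0.
    - eapply Q_step; eauto.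
    - auto.
    - auto. }
  pose proof (Q_size Hq). lia.
Qed.

Lemma Ebounded_mono (D : APN) s t (y : ETerm D) : s <= t -> Ebounded s y -> Ebounded t y.
Proof. intros H Hb z Hz. pose proof (Hb z Hz). lia. Qed.

Lemma base_bounded (D : APN) s d : bounded D s d -> Ebounded s (Base d).
Proof.
  intros Hb x' Hx.
  assert (forall x, clos_refl_trans _ (@Estep D) x x' -> forall d0, x = Base d0 ->
     clos_refl_trans _ (step D) d d0 -> exists d1, x' = Base d1 /\ clos_refl_trans _ (step D) d d1).
  { clear Hx. intros x Hx. induction Hx; intros d0 Hd0 Hr; subst.
    - inversion H; subst. exists d'. split; auto. eapply rt_trans; [exact Hr| apply rt_step; auto].
    - eauto.
    - destruct (IHHx1 d0 eq_refl Hr) as [d1 [-> Hr1]]. eauto. }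
  destruct (H _ Hx d eq_refl (rt_refl _ _ _)) as [d1 [-> Hr1]].
  simpl. apply Hb. auto.
Qed.

Theorem mainTheorem7 (D : APN) (s : nat) (d : carrier D) :
  bounded D s d ->
  Ebounded (height D d * (s + 2)) (E (Base d)) /\
  Ebounded (2 ^ height D d * height D d * (s + 4)) (E (E (Base d))).
Proof.
  intros Hb.
  pose proof (lemmaA (base_bounded Hb)) as H1. simpl in H1.
  split.
  - eapply Ebounded_mono; [|exact H1]. lia.
  - pose proof (lemmaA H1) as H2. simpl in H2.
    eapply Ebounded_mono; [|exact H2].
    pose proof (height_pos D d) as Hh. pose proof (pow2_pos (height D d)).
    set (h := height D d) in *. set (P := 2 ^ h) in *.
    destruct P as [|P']; [lia|].
    replace (S P' - 1) with P' by lia.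
    assert (h * (s+2) - 1 + 2 = h*(s+2) + 1) by nia.
    rewrite H0. nia.
Qed.
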